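(* Let $R$ be $\mathbb{Z}$ or $\mathbb{Z}/m\mathbb{Z}$ with $m\ge2$, let $\Lambda$ be a free abelian group with basis $x_1,\ldots,x_n$, and let $\vec q=(q_1,\ldots,q_n)$ be an $n$-tuple in $R[\Lambda]$ satisfying the generalized flatness condition. Then every syzygy of $\vec q$ is trivial.
   Context: $R[\Lambda]$ is identified with $R[x_1^{\pm1},\ldots,x_n^{\pm1}]$; $\Lambda_i=\langle x_1,\ldots,x_i\rangle$. A polynomial $p\in R[\Lambda_i]$ is a divisor with respect to $x_i$ if, writing $p=p_kx_i^k+\cdots+p_mx_i^m$ with $p_j\in R[\Lambda_{i-1}]$ and $p_k\ne0$, $p_k$ is a monic monomial in $x_1,\ldots,x_{i-1}$. $(r_1,\ldots,r_n)$ satisfies the flatness condition if $r_i\in R[\Lambda_i]$ and $r_i$ is a divisor with respect to $x_i$ for all $i$; $\vec q$ satisfies the generalized flatness condition if $\vec qA$ satisfies the flatness condition for some $A\in GL_n(R[\Lambda])$. A syzygy of $\vec q$ is $(f_1,\ldots,f_n)\in R[\Lambda]^n$ with $\sum_if_iq_i=0$; it is trivial if it lies in the $R[\Lambda]$-submodule generated by the vectors $S_{ij}$ ($i\ne j$) having $q_j$ in position $i$, $-q_i$ in position $j$, and $0$ elsewhere. *)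

(* Defs.v *)
From HB Require Import structures.
From mathcomp Require Import all_boot all_order all_algebra.
From mathcomp.multinomials Require Export freeg.

Set Implicit Arguments.
Unset Strict Implicit.
Unset Printing Implicit Defensive.

Import Order.TTheory GRing.Theory Num.Theory.
Local Open Scope ring_scope.

(* The group ring R[Lambda] of Lambda = Z^n (free abelian group with basis
   x_1,...,x_n), i.e. the Laurent polynomial ring R[x_1^{+-1},...,x_n^{+-1}]:
   finite formal R-linear combinations of monomials x^e, e : 'rV[int]_n.
   The monomial x^e is << e >>, and [coeff e p] is the coefficient of x^e in p.
   Variable x_{i+1} of the paper corresponds to the index i : 'I_n. *)
Definition laurent (R : nzRingType) (n : nat) := {freeg 'rV[int]_n / R}.

Section Laurent.
Variables (R : comNzRingType) (n : nat).
Local Notation L := (laurent R n).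

Definition lmono (e : 'rV[int]_n) : L := << e >>.

Definition lone : L := lmono 0.

Definition lmul (p q : L) : L :=
  fglift (fun e : 'rV[int]_n => fglift (fun f : 'rV[int]_n => lmono (e + f)) q) p.

(* p lies in R[Lambda_k], Lambda_k = <x_1,...,x_k>: every monomial occurring
   in p involves only x_1, ..., x_k (exponents of x_{j+1}, j >= k, vanish). *)
Definition in_sub (k : nat) (p : L) : Prop :=
  forall e : 'rV[int]_n, coeff e p != 0 ->
    forall j : 'I_n, (k <= j)%N -> e 0 j = 0.

(* p in R[Lambda_{i+1}] is a divisor with respect to x_{i+1}:
   writing p = p_k x_{i+1}^k + ... + p_m x_{i+1}^m with p_j in R[Lambda_i]
   and p_k <> 0, the lowest coefficient p_k is a monic monomial x^d
   (d in Lambda_i). *)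
Definition divisor (i : 'I_n) (p : L) : Prop :=
  exists (k : int) (d : 'rV[int]_n),
    [/\ d 0 i = k,
        (forall j : 'I_n, (i < j)%N -> d 0 j = 0),
        (forall e : 'rV[int]_n, coeff e p != 0 -> k <= e 0 i) &
        (forall e : 'rV[int]_n, e 0 i = k -> coeff e p = (e == d)%:R)].

Definition flat (r : 'I_n -> L) : Prop :=
  forall i : 'I_n, in_sub i.+1 (r i) /\ divisor i (r i).

Definition mx_inverse (A B : 'I_n -> 'I_n -> L) : Prop :=
  forall i j : 'I_n,
    \sum_(k < n) lmul (A i k) (B k j) = (if i == j then lone else 0) /\
    \sum_(k < n) lmul (B i k) (A k j) = (if i == j then lone else 0).

Definition vecmul (q : 'I_n -> L) (A : 'I_n -> 'I_n -> L) : 'I_n -> L :=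
  fun j => \sum_(i < n) lmul (q i) (A i j).

Definition gen_flat (q : 'I_n -> L) : Prop :=
  exists A B : 'I_n -> 'I_n -> L, mx_inverse A B /\ flat (vecmul q A).

Definition syzygy (q f : 'I_n -> L) : Prop :=
  \sum_(i < n) lmul (f i) (q i) = 0.

Definition Svec (q : 'I_n -> L) (i j : 'I_n) : 'I_n -> L :=
  fun k => if k == i then q j else if k == j then - q i else 0.

Definition trivial_syzygy (q f : 'I_n -> L) : Prop :=
  exists c : 'I_n -> 'I_n -> L,
    forall k : 'I_n,
      f k = \sum_(i < n) \sum_(j < n | i != j) lmul (c i j) (Svec q i j k).

End Laurent.

(* Main.v *)
Require Import Defs.
From HB Require Import structures.
From mathcomp Require Import all_boot all_order all_algebra.
From mathcomp.multinomials Require Import freeg.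
From mathcomp Require Import zify ring.
Set Implicit Arguments. Unset Strict Implicit. Unset Printing Implicit Defensive.
Import Order.TTheory GRing.Theory Num.Theory.
Local Open Scope ring_scope.

Section Lift.
Variables (R : comNzRingType) (n : nat) (M : lmodType R) (G : 'rV[int]_n -> M).
HB.instance Definition _ := GRing.isAdditive.Build (laurent R n) M (fglift G) (lift_is_additive G).
End Lift.

Section Ring.
Variables (R : comNzRingType) (n : nat).
Local Notation L := (laurent R n).
Local Notation E := 'rV[int]_n.

Lemma fglift_dom (M : lmodType R) (G : E -> M) (D : L) :
  fglift G D = \sum_(z <- dom D) coeff z D *: G z.
Proof. by rewrite -{1}[D]freeg_sumE raddf_sum; apply: eq_bigr => z _; exact: liftU. Qed.

Lemma fglift_fD (M : lmodType R) (G1 G2 : E -> M) (D : L) :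
  fglift (fun z => G1 z + G2 z) D = fglift G1 D + fglift G2 D.
Proof. by rewrite !fglift_dom -big_split; apply: eq_bigr => z _; rewrite scalerDr. Qed.

Lemma scaleU (c : R) (x : E) : c *: (<< x >> : L) = << c *g x >>.
Proof. by apply/eqP/freeg_eqP => y; rewrite coeffZ !coeffU mul1r. Qed.

Lemma lmulU a b (e f : E) : lmul << a *g e >> << b *g f >> = << a * b *g (e + f) >> :> L.
Proof. by rewrite /lmul !liftU /lmono scalerA scaleU. Qed.

Lemma lmulDl (p1 p2 q : L) : lmul (p1 + p2) q = lmul p1 q + lmul p2 q.
Proof. by rewrite /lmul raddfD. Qed.

Lemma lmulDr (p q1 q2 : L) : lmul p (q1 + q2) = lmul p q1 + lmul p q2.
Proof. by rewrite /lmul !fglift_dom -big_split; apply: eq_bigr => z _; rewrite raddfD scalerDr. Qed.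

Lemma lmul0l (q : L) : lmul 0 q = 0.
Proof. by rewrite /lmul raddf0. Qed.

Lemma lmul0r (p : L) : lmul p 0 = 0.
Proof. by rewrite /lmul fglift_dom big1 // => z _; rewrite raddf0 scaler0. Qed.

Lemma lmulC (p q : L) : lmul p q = lmul q p.
Proof.
elim/freeg_ind_dom0: p q => [|a e p _ _ IH] q; first by rewrite lmul0l lmul0r.
rewrite lmulDl lmulDr IH; f_equal.
elim/freeg_ind_dom0: q => [|b f q _ _ IHq]; first by rewrite lmul0l lmul0r.
by rewrite lmulDl lmulDr IHq !lmulU [a * b]mulrC [e + f]addrC.
Qed.

Lemma lmulA (p q r : L) : lmul p (lmul q r) = lmul (lmul p q) r.
Proof.
elim/freeg_ind_dom0: p q r => [|a e p _ _ IH] q r; first by rewrite !lmul0l.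
rewrite !lmulDl IH; f_equal.
elim/freeg_ind_dom0: q r => [|b f q _ _ IHq] r; first by rewrite lmul0l !lmul0r lmul0l.
rewrite !lmulDl !lmulDr !lmulDl IHq; f_equal.
elim/freeg_ind_dom0: r => [|c g r _ _ IHr]; first by rewrite !lmul0r.
by rewrite !lmulDr IHr !lmulU mulrA addrA.
Qed.

Lemma lmul1 (p : L) : lmul (lone R n) p = p.
Proof.
elim/freeg_ind_dom0: p => [|a e p _ _ IH]; first by rewrite lmul0r.
by rewrite lmulDr IH /lone /lmono lmulU mul1r add0r.
Qed.

Lemma lone_neq0 : lone R n != 0 :> L.
Proof. by rewrite /lone /lmono freegU_eq0 oner_neq0. Qed.

End Ring.

HB.instance Definition _ (R : comNzRingType) (n : nat) := GRing.Lmodule.on (laurent R n).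
HB.instance Definition _ (R : comNzRingType) (n : nat) :=
  GRing.Zmodule_isComNzRing.Build (laurent R n) (@lmulA R n) (@lmulC R n) (@lmul1 R n) (@lmulDl R n) (@lone_neq0 R n).


Section Coef.
Variables (R : comNzRingType) (n : nat).
Local Notation L := (laurent R n).
Local Notation E := 'rV[int]_n.
Implicit Types (p q s g : L) (x e f d : E).

Lemma L_eq p q : (forall x, coeff x p = coeff x q) -> p = q.
Proof. by move=> H; apply/eqP/freeg_eqP. Qed.

Lemma sum_coeff_delta p y : \sum_(z <- dom p) coeff z p * (z == y)%:R = coeff y p.
Proof.
rewrite -{3}[p]freeg_sumE raddf_sum /=; apply: eq_bigr => z _.
by rewrite coeffU.
Qed.

Lemma mulE p q : p * q = lmul p q. Proof. by []. Qed.

Lemma coeffM p q x : coeff x (p * q) = \sum_(e <- dom p) coeff e p * coeff (x - e) q.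
Proof.
rewrite mulE /lmul fglift_dom raddf_sum; apply: eq_bigr => e _.
rewrite /= coeffZ fglift_dom raddf_sum; congr (_ * _); rewrite -[RHS]sum_coeff_delta.
apply: eq_bigr => f _; rewrite /= coeffZ /lmono coeffU mul1r; congr (_ * _%:R).
by rewrite (eq_sym f) subr_eq (addrC f) eq_sym.
Qed.

Lemma lmonoM d f : lmono R d * lmono R f = lmono R (d + f) :> L.
Proof. by rewrite mulE /lmono lmulU mulr1. Qed.

Lemma lmono0 : lmono R 0 = 1 :> L. Proof. by []. Qed.

Lemma coeff_lmono d x : coeff x (lmono R d : L) = (d == x)%:R.
Proof. by rewrite /lmono coeffU mul1r. Qed.

Lemma coeffM_nz p q x : coeff x (p * q) != 0 ->
  exists2 e, coeff e p != 0 & coeff (x - e) q != 0.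
Proof.
rewrite coeffM; elim: (dom p) => [|e s IH]; first by rewrite big_nil eqxx.
rewrite big_cons; case: (eqVneq (coeff e p * coeff (x - e) q) 0) => [->|Hne].
  by rewrite add0r.
move=> _; exists e.
  by apply: contraNneq Hne => ->; rewrite mul0r.
by apply: contraNneq Hne => ->; rewrite mulr0.
Qed.

Definition proj (P : pred E) p : L := \sum_(e <- dom p | P e) << coeff e p *g e >>.

Lemma coeff_proj (P : pred E) p x : coeff x (proj P p) = if P x then coeff x p else 0.
Proof.
rewrite raddf_sum /= big_mkcond /=; case Px: (P x).
  rewrite -sum_coeff_delta; apply: eq_bigr => e _; rewrite coeffU.
  by case: eqVneq => [->|_]; rewrite ?Px ?mulr0 ?if_same.
by rewrite big1 // => e _; rewrite coeffU; case: eqVneq => [->|_]; rewrite ?Px ?mulr0 ?if_same.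
Qed.

Lemma proj_is_additive (P : pred E) : additive (proj P).
Proof.
move=> p q; apply: L_eq => x; rewrite coeffB !coeff_proj coeffB.
by case: (P x); rewrite ?subr0.
Qed.

Lemma proj_id (P : pred E) p : (forall x, coeff x p != 0 -> P x) -> proj P p = p.
Proof.
move=> H; apply: L_eq => x; rewrite coeff_proj; case Px: (P x) => //.
by case: (eqVneq (coeff x p) 0) => [->//|/H]; rewrite Px.
Qed.

Lemma proj_0 (P : pred E) p : (forall x, coeff x p != 0 -> ~~ P x) -> proj P p = 0.
Proof.
move=> H; apply: L_eq => x; rewrite coeff_proj coeff0; case Px: (P x) => //.
by case: (eqVneq (coeff x p) 0) => [->//|/H]; rewrite Px.
Qed.

End Coef.

Section ProjAdd.
Variables (R : comNzRingType) (n : nat) (P : pred 'rV[int]_n).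
HB.instance Definition _ := GRing.isAdditive.Build (laurent R n) (laurent R n) (@proj R n P) (@proj_is_additive R n P).
End ProjAdd.

Section Coef2.
Variables (R : comNzRingType) (n : nat).
Local Notation L := (laurent R n).
Local Notation E := 'rV[int]_n.
Implicit Types (p q s g : L) (x e f d : E).

Lemma proj_mul (P : pred E) p s :
  (forall e f, coeff f s != 0 -> P (e + f) = P e) -> proj P (p * s) = proj P p * s.
Proof.
move=> H.
have Hp : p = proj P p + proj (predC P) p.
  apply: L_eq => x; rewrite coeffD !coeff_proj /=.
  by case: (P x); rewrite ?addr0 ?add0r.
have Hx : forall x e, P (e + (x - e)) = P x by move=> x e; rewrite addrC subrK.
rewrite {1}Hp mulrDl raddfD /=.
rewrite (@proj_id _ _ P (proj P p * s)); last first.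
  move=> x /coeffM_nz [e]; rewrite coeff_proj; case Pe: (P e); rewrite ?eqxx // => _ He.
  by rewrite -(Hx x e) H.
rewrite (@proj_0 _ _ P (proj _ p * s)) ?addr0 //.
move=> x /coeffM_nz [e]; rewrite coeff_proj /=; case Pe: (P e); rewrite ?eqxx //= => _ He.
by rewrite -(Hx x e) H // Pe.
Qed.

End Coef2.

Section Ideal.
Variables (R : comNzRingType) (n : nat).
Local Notation L := (laurent R n).
Local Notation E := 'rV[int]_n.
Implicit Types (p q s g : L) (x y e f d : E).
Variable r : 'I_n -> L.

Definition inI (k : nat) p := exists h : 'I_n -> L, p = \sum_(i < n | (i < k)%N) h i * r i.

Lemma inI0 k : inI k 0.
Proof. by exists (fun=> 0); rewrite big1 // => i _; rewrite mul0r. Qed.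

Lemma inID k p q : inI k p -> inI k q -> inI k (p + q).
Proof.
move=> [h1 ->] [h2 ->]; exists (fun i => h1 i + h2 i).
by rewrite -big_split; apply: eq_bigr => i _; rewrite mulrDl.
Qed.

Lemma inIN k p : inI k p -> inI k (- p).
Proof.
move=> [h ->]; exists (fun i => - h i).
by rewrite -sumrN; apply: eq_bigr => i _; rewrite mulNr.
Qed.

Lemma inIM k a p : inI k p -> inI k (a * p).
Proof.
move=> [h ->]; exists (fun i => a * h i).
by rewrite mulr_sumr; apply: eq_bigr => i _; rewrite mulrA.
Qed.

Lemma inI_proj k (P : pred E) p :
  (forall i : 'I_n, (i < k)%N -> forall e f, coeff f (r i) != 0 -> P (e + f) = P e) ->
  inI k p -> inI k (proj P p).
Proof.
move=> H [h ->]; exists (fun i => proj P (h i)); rewrite raddf_sum /=.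
by apply: eq_bigr => i Hi; apply: proj_mul; apply: H.
Qed.

Definition sameHi (k : nat) x y := [forall j : 'I_n, (k <= j)%N ==> (x 0 j == y 0 j)].

Lemma sameHiP k x y : reflect (forall j : 'I_n, (k <= j)%N -> x 0 j = y 0 j) (sameHi k x y).
Proof.
apply: (iffP forallP) => H j.
  by move=> Hj; apply/eqP; apply: (implyP (H j)).
by apply/implyP => Hj; apply/eqP; apply: H.
Qed.

Lemma sameHi_inv k e f y : (forall j : 'I_n, (k <= j)%N -> f 0 j = 0) ->
  sameHi k (e + f) y = sameHi k e y.
Proof.
move=> Hf; apply: eq_forallb => j; case Hj: (k <= j)%N => //=.
by rewrite mxE Hf // addr0.
Qed.

Lemma min_exists (T : eqType) (s : seq T) (phi : T -> int) : s != [::] ->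
  exists2 x, x \in s & forall y : T, y \in s -> phi x <= phi y.
Proof.
elim: s => [//|a s IH] _.
case: (eqVneq s [::]) => [->|/IH [b Hb Hmin]].
  by exists a; [rewrite mem_head | move=> y; rewrite inE => /eqP ->].
case: (lerP (phi a) (phi b)) => H.
  exists a; first by rewrite mem_head.
  by move=> y; rewrite inE => /orP [/eqP -> // | /Hmin]; apply: le_trans H.
exists b; first by rewrite inE Hb orbT.
by move=> y; rewrite inE => /orP [/eqP -> | /Hmin //]; apply: ltW.
Qed.

Lemma int_aux (x e e0 a : int) : x = e0 + a -> e0 <= e -> a <= x - e -> e = e0.
Proof. lia. Qed.
Lemma int_aux2 (x e e0 : int) : x - e = 0 -> x = e0 -> e = e0.
Proof. lia. Qed.
Lemma int_aux3 (x e e0 a : int) : x = e0 + a -> e = e0 -> x - e = a.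
Proof. lia. Qed.

Variable kk : 'I_n.
Hypothesis Hlow : forall i : 'I_n, (i < kk)%N -> in_sub i.+1 (r i).
Hypothesis Hk : in_sub kk.+1 (r kk).
Hypothesis Hdiv : divisor kk (r kk).

Lemma nzd_aux N g : (size (dom g) <= N)%N -> inI kk (g * r kk) -> inI kk g.
Proof.
elim: N g => [|N IH] g Hs Hg.
  by move: Hs; rewrite leqn0 size_eq0 dom_eq0 => /eqP ->; apply: inI0.
case: (eqVneq g 0) => [->|gnz]; first exact: inI0.
have [e1 He1] : exists e1, e1 \in dom g.
  by move: gnz; rewrite -dom_eq0; case: (dom g) => [|x l] //= _; exists x; rewrite mem_head.
set S := [seq e <- dom g | sameHi kk.+1 e e1].
have [e0] : exists2 e0, e0 \in S & forall y, y \in S -> e0 0 kk <= y 0 kk.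
  apply: min_exists; apply/eqP => HS.
  have : e1 \in S by rewrite mem_filter He1 andbT; apply/sameHiP.
  by rewrite HS.
rewrite mem_filter => /andP [He0h He0] Hmin.
case: Hdiv => a [d [Hda Hdhi Hlowdeg Hcoef]].
set c := proj (fun e => sameHi kk e e0) g.
set Q := (fun e => sameHi kk e (e0 + d)).
set g' := g - c.
have key : proj Q (g * r kk) = c * lmono R d.
  have -> : g * r kk = c * lmono R d + c * (r kk - lmono R d) + g' * r kk.
    by rewrite /g'; ring.
  rewrite !raddfD /=.
  rewrite (@proj_id _ _ Q (c * lmono R d)); last first.
    move=> x /coeffM_nz [e]; rewrite coeff_proj; case Hee: (sameHi kk e e0); rewrite ?eqxx // => _.
    rewrite coeff_lmono; case: (eqVneq d (x - e)) => [Hd _|_]; last by rewrite /= eqxx.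
    have -> : x = e + d by rewrite Hd addrC subrK.
    apply/sameHiP => j Hj; rewrite !mxE.
    by move/sameHiP: Hee => /(_ j Hj) ->.
  rewrite (@proj_0 _ _ Q (c * _)); last first.
    move=> x /coeffM_nz [e]; rewrite coeff_proj; case Hee: (sameHi kk e e0); rewrite ?eqxx // => _.
    rewrite coeffB coeff_lmono => Hf; apply/negP => /sameHiP Hq.
    have Hxk := Hq kk (leqnn _); rewrite mxE in Hxk.
    have He := (sameHiP _ _ _ Hee) kk (leqnn _).
    have Hfk : (x - e) 0 kk = a by rewrite !mxE; apply: int_aux3; rewrite ?Hxk -?Hda.
    by rewrite Hcoef // [d == _]eq_sym subrr eqxx in Hf.
  rewrite (@proj_0 _ _ Q (g' * _)) ?addr0 //.
  move=> x /coeffM_nz [e]; rewrite /g' coeffB coeff_proj => He Hf.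
  have [Hge Hne] : coeff e g != 0 /\ ~~ sameHi kk e e0.
    by move: He; case: (sameHi kk e e0); rewrite ?subrr ?eqxx // subr0.
  apply: contra Hne => /sameHiP Hq.
  have Hfhi := Hk Hf.
  have Hxe : forall j : 'I_n, (kk < j)%N -> e 0 j = e0 0 j.
    move=> j Hj; have := Hq j (ltnW Hj); rewrite !mxE Hdhi //.
    have := Hfhi j Hj; rewrite !mxE addr0 => H1 H2; exact: int_aux2 H1 H2.
  have Hin : e \in S.
    rewrite mem_filter mem_dom Hge andbT; apply/sameHiP => j Hj.
    by rewrite (Hxe j Hj); move/sameHiP: He0h => /(_ j Hj).
  have H1 := Hmin e Hin.
  have H2 := Hlowdeg _ Hf; rewrite !mxE in H2.
  have H3 := Hq kk (leqnn _); rewrite !mxE Hda in H3.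
  apply/sameHiP => j; rewrite leq_eqVlt => /orP [/eqP Hj|Hj]; last exact: Hxe.
  have -> : j = kk by apply: val_inj.
  exact: int_aux H3 H1 H2.
have Hc : inI kk c.
  have H1 : inI kk (c * lmono R d).
    rewrite -key; apply: inI_proj Hg => i Hi e f Hf; apply: sameHi_inv => j Hj.
    by apply: (Hlow Hi Hf); apply: leq_trans Hj.
  have := inIM (lmono R (- d)) H1.
  by rewrite mulrC -mulrA lmonoM addrN lmono0 mulr1.
have Hg' : inI kk (g' * r kk).
  rewrite /g' mulrBl; apply: inID Hg (inIN _); rewrite mulrC; exact: inIM.
have Hsz : (size (dom g') <= N)%N.
  have sub : {subset dom g' <= rem e0 (dom g)}.
    move=> x; rewrite (mem_rem_uniq _ (uniq_dom g)) !mem_dom /g' coeffB coeff_proj inE.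
    case: (eqVneq x e0) => [->|nx] /=.
      have -> : sameHi kk e0 e0 by apply/sameHiP.
      by rewrite subrr eqxx.
    by rewrite mem_dom; case: (sameHi kk x e0); rewrite ?subrr ?eqxx // subr0.
  have := uniq_leq_size (uniq_dom g') sub; rewrite size_rem // => H.
  by apply: leq_trans H _; case: (size (dom g)) Hs.
have -> : g = g' + c by rewrite /g' subrK.
by apply: inID => //; apply: IH.
Qed.

Lemma nzd g : inI kk (g * r kk) -> inI kk g.
Proof. exact: (@nzd_aux (size (dom g))). Qed.

End Ideal.

Section Syz.
Variables (R : comNzRingType) (n : nat).
Local Notation L := (laurent R n).

Inductive Tc (q : 'I_n -> L) : ('I_n -> L) -> Prop :=
| Tc0 : Tc q (fun _ => 0)
| TcS (a : L) (i j : 'I_n) : i != j -> Tc q (fun l => a * Svec q i j l)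
| TcD f g : Tc q f -> Tc q g -> Tc q (fun l => f l + g l)
| TcE f g : (forall l, f l = g l) -> Tc q f -> Tc q g.

Lemma Tc_sum q (I : Type) (s : seq I) (P : pred I) (F : I -> 'I_n -> L) :
  (forall x, P x -> Tc q (F x)) -> Tc q (fun l => \sum_(x <- s | P x) F x l).
Proof.
move=> H; elim: s => [|x s IH].
  by apply: TcE (Tc0 q) => l; rewrite big_nil.
case Px: (P x).
  by apply: TcE (TcD (H x Px) IH) => l; rewrite big_cons Px.
by apply: TcE IH => l; rewrite big_cons Px.
Qed.

Lemma Tc_triv q f : Tc q f -> trivial_syzygy q f.
Proof.
elim => {f}.
- exists (fun _ _ => 0) => k; rewrite big1 // => i _; rewrite big1 // => j _.
  by rewrite -mulE mul0r.
- move=> a i j nij; exists (fun x y => if (x == i) && (y == j) then a else 0) => l.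
  rewrite (bigD1 i) //= [\sum_(x < n | x != i) _]big1 => [|x nx]; last first.
    by rewrite big1 // => y _; rewrite (negbTE nx) -mulE mul0r.
  rewrite (bigD1 j) //= [\sum_(y < n | (i != y) && (y != j)) _]big1 => [|y /andP [_ ny]]; last first.
    by rewrite (negbTE ny) andbF -mulE mul0r.
  by rewrite !eqxx !addr0.
- move=> f g _ [c1 H1] _ [c2 H2]; exists (fun x y => c1 x y + c2 x y) => l.
  rewrite H1 H2 -big_split; apply: eq_bigr => x _; rewrite -big_split.
  by apply: eq_bigr => y _; rewrite -!mulE mulrDl.
- by move=> f g E _ [c H]; exists c => l; rewrite -E.
Qed.

Lemma SvecE (q : 'I_n -> L) i j l : i != j ->
  Svec q i j l = (l == i)%:R * q j - (l == j)%:R * q i.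
Proof.
move=> nij; rewrite /Svec.
case: (eqVneq l i) => [->|nli].
  by rewrite (negbTE nij) mul1r mul0r subr0.
case: (eqVneq l j) => [_|nlj].
  by rewrite mul1r mul0r sub0r.
by rewrite !mul0r subr0.
Qed.

Lemma sum_delta (X : 'I_n -> L) i : \sum_(m < n) (m == i)%:R * X m = X i.
Proof.
rewrite (bigD1 i) //= eqxx mul1r big1 ?addr0 // => m /negbTE ->.
by rewrite mul0r.
Qed.

Lemma Svec_syz (q : 'I_n -> L) i j : i != j -> \sum_m Svec q i j m * q m = 0.
Proof.
move=> nij.
under eq_bigr => m _ do rewrite SvecE // mulrBl -!mulrA.
by rewrite sumrB !sum_delta mulrC subrr.
Qed.

Lemma sumS (q : 'I_n -> L) (C : 'I_n -> 'I_n -> L) l :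
  \sum_i \sum_(j | i != j) C i j * Svec q i j l = \sum_j (C l j - C j l) * q j.
Proof.
transitivity (\sum_i \sum_j ((i == l)%:R * (C i j * q j) - (j == l)%:R * (C i j * q i))).
  apply: eq_bigr => i _; rewrite [RHS](bigD1 i) //= subrr add0r.
  apply: eq_big => [j|j nij]; first by rewrite eq_sym.
  rewrite SvecE // [l == i]eq_sym [l == j]eq_sym; ring.
under eq_bigr => i _ do rewrite sumrB.
rewrite sumrB.
under [X in X - _]eq_bigr => i _ do rewrite -mulr_sumr.
rewrite sum_delta.
under [X in _ - X]eq_bigr => i _ do rewrite sum_delta.
by rewrite -sumrB; apply: eq_bigr => j _; rewrite mulrBl.
Qed.

Lemma Tc_transfer (q r : 'I_n -> L) (A : 'I_n -> 'I_n -> L) g :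
  (forall j, r j = \sum_i q i * A i j) -> Tc r g ->
  Tc q (fun l => \sum_j A l j * g j).
Proof.
move=> Hr; elim => {g}.
- by apply: TcE (Tc0 q) => l; rewrite big1 // => j _; rewrite mulr0.
- move=> a a0 b0 nab.
  set C := fun i j => a * A i a0 * A j b0.
  have T : Tc q (fun l => \sum_i \sum_(j | i != j) C i j * Svec q i j l).
    apply: Tc_sum => i _.
    by apply: Tc_sum => j nij; apply: TcS.
  apply: TcE T => l; rewrite sumS.
  transitivity (a * A l a0 * r b0 - a * A l b0 * r a0).
    rewrite !Hr !mulr_sumr -sumrB; apply: eq_bigr => j _; rewrite /C; ring.
  symmetry.
  transitivity (\sum_j ((j == a0)%:R * (a * A l j * r b0) - (j == b0)%:R * (a * A l j * r a0))).
    by apply: eq_bigr => j _; rewrite SvecE //; ring.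
  by rewrite sumrB !sum_delta.
- move=> f g _ H1 _ H2; apply: TcE (TcD H1 H2) => l.
  by rewrite -big_split; apply: eq_bigr => j _; rewrite mulrDr.
- by move=> f g E _ H; apply: TcE H => l; apply: eq_bigr => j _; rewrite E.
Qed.

End Syz.

Section Main.
Variables (R : comNzRingType) (n : nat).
Local Notation L := (laurent R n).
Variable r : 'I_n -> L.
Hypothesis Hflat : flat r.

Lemma claim k : (k <= n)%N -> forall f : 'I_n -> L,
  (forall l : 'I_n, (k <= l)%N -> f l = 0) -> \sum_l f l * r l = 0 -> Tc r f.
Proof.
elim: k => [|k IH] Hk f Hf Hsyz.
  by apply: TcE (Tc0 r) => l; rewrite Hf.
set kk : 'I_n := Ordinal Hk.
have ltk : forall l : 'I_n, (l < k)%N -> l != kk.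
  by move=> l Hl; apply/eqP => E; move: Hl; rewrite E /= ltnn.
have Hsplit : \sum_l f l * r l = \sum_(l < n | (l < k)%N) f l * r l + f kk * r kk.
  rewrite (bigD1 kk) //= addrC; congr (_ + _).
  rewrite big_mkcond [RHS]big_mkcond; apply: eq_bigr => l _.
  case: (ltnP l k) => Hl; first by rewrite ltk.
  case: (eqVneq l kk) => [->|nl] //=.
  rewrite Hf ?mul0r //.
  by rewrite ltn_neqAle Hl andbT; apply: contra nl => /eqP E; apply/eqP/val_inj.
have HI : inI r k (f kk * r kk).
  exists (fun l => - f l).
  under eq_bigr => l _ do rewrite mulNr.
  by rewrite sumrN; apply/eqP; rewrite -addr_eq0 addrC -Hsplit Hsyz.
have Hlow : forall i : 'I_n, (i < kk)%N -> in_sub i.+1 (r i).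
  by move=> i _; case: (Hflat i).
have [g Hg] := nzd Hlow (proj1 (Hflat kk)) (proj2 (Hflat kk)) HI.
set f' := fun m => f m + \sum_(l < n | (l < k)%N) g l * Svec r l kk m.
have HS : forall m : 'I_n, (k <= m)%N ->
    \sum_(l < n | (l < k)%N) g l * Svec r l kk m = - ((m == kk)%:R * f kk).
  move=> m Hm; rewrite Hg mulr_sumr -sumrN; apply: eq_bigr => l Hl.
  have Hml : (m == l) = false.
    by apply/eqP => E; move: Hl; rewrite -E ltnNge Hm.
  rewrite SvecE ?ltk // Hml /=; ring.
have Tf' : Tc r f'.
  apply: IH; first exact: ltnW.
    move=> l Hl; rewrite /f' HS //.
    case: (eqVneq l kk) => [->|nl]; first by rewrite mul1r subrr.
    rewrite mul0r oppr0 addr0 Hf //.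
    by rewrite ltn_neqAle Hl andbT; apply: contra nl => /eqP E; apply/eqP/val_inj.
  rewrite /f'; under eq_bigr => m _ do rewrite mulrDl.
  rewrite big_split /= Hsyz add0r.
  under eq_bigr => m _ do rewrite mulr_suml.
  rewrite exchange_big /= big1 // => l Hl.
  under eq_bigr => m _ do rewrite -mulrA.
  by rewrite -mulr_sumr Svec_syz ?mulr0 ?ltk.
apply: TcE (TcD Tf' (@Tc_sum _ _ r _ (index_enum 'I_n) (fun l => (l < k)%N)
   (fun l m => (- g l) * Svec r l kk m) _)) => [m|]; last first.
  by move=> l Hl; apply: TcS; apply: ltk.
rewrite /f' -addrA -big_split /= big1 ?addr0 // => l _.
by rewrite mulNr addrN.
Qed.

End Main.

Lemma main (R : comNzRingType) (n : nat) (q : 'I_n -> laurent R n) :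
  gen_flat q -> forall f, syzygy q f -> trivial_syzygy q f.
Proof.
move=> [A [B [HAB Hfl]]] f Hsyz.
set r := vecmul q A.
have HAB1 : forall i l : 'I_n, \sum_k A i k * B k l = (i == l)%:R.
  move=> i l; have := proj1 (HAB i l); rewrite -/(lmul _ _) => ->.
  by case: (i == l).
have Hq : forall l, q l = \sum_j r j * B j l.
  move=> l; rewrite /r /vecmul.
  under eq_bigr => j _ do rewrite mulr_suml.
  rewrite exchange_big /=.
  rewrite -[LHS](sum_delta (fun i => q i) l); apply: eq_bigr => i _.
  rewrite -HAB1 mulr_suml; apply: eq_bigr => j _; rewrite -!mulE; ring.
set g := fun j => \sum_l B j l * f l.
have Hsyz' : \sum_i f i * q i = 0 := Hsyz.
have Hg : \sum_j g j * r j = 0.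
  rewrite /g; under eq_bigr => j _ do rewrite mulr_suml.
  rewrite exchange_big /= -[RHS]Hsyz'; apply: eq_bigr => l _.
  rewrite Hq mulr_sumr; apply: eq_bigr => j _; ring.
have Tcg : Tc r g.
  apply: (claim Hfl (leqnn n)) => // l; by rewrite leqNgt ltn_ord.
have := Tc_transfer (r := r) (A := A) (fun j => erefl) Tcg => T.
apply: Tc_triv; apply: TcE T => l.
rewrite /g; under eq_bigr => j _ do rewrite mulr_sumr.
rewrite exchange_big /=.
rewrite -[RHS](sum_delta (fun i => f i) l); apply: eq_bigr => m _.
rewrite [m == l]eq_sym -(HAB1 l m) mulr_suml.
by apply: eq_bigr => j _; rewrite mulrA.
Qed.

Theorem lemma2p10 :
  (forall (n : nat) (q : 'I_n -> laurent int n),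
      gen_flat q -> forall f, syzygy q f -> trivial_syzygy q f) /\
  (forall (m : nat), (1 < m)%N ->
    forall (n : nat) (q : 'I_n -> laurent 'Z_m n),
      gen_flat q -> forall f, syzygy q f -> trivial_syzygy q f).
Proof.
split; first by move=> n q; apply: main.
by move=> m _ n q; apply: main.
Qed.
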